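(* Let $R$ be a ring and let $(f_k)_{k\in\mathbb{Z}_{\geq 0}}$ be a sequence of elements of $R$ with $f_0=1$. For $s\in\mathbb{Z}_{\geq 0}$ and $0\le k\le s$, let $\nu_{s,k}\in\mathbb{Z}$ be the coefficient of $z^k$ in the Laurent polynomial $(z+z^{-1})^s\in\mathbb{Z}[z^{\pm1}]$. Suppose that for every $s\in\mathbb{Z}_{\geq0}$ we have $f_1^s=\sum_{k=0}^s \nu_{s,k}f_k$. Then $f_s=T_s(f_1)$ for all $s\geq 1$.
   Context: The Chebyshev polynomials of the first kind $T_k(z)\in\mathbb{Z}[z]$, $k\ge 0$, are defined by $T_0(z)=2$, $T_1(z)=z$, and $T_{k+1}(z)=zT_k(z)-T_{k-1}(z)$; equivalently $T_k(z+z^{-1})=z^k+z^{-k}$. *)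

(* Defs.v *)
From HB Require Import structures.
From mathcomp Require Import all_boot all_order all_algebra.
Set Implicit Arguments. Unset Strict Implicit. Unset Printing Implicit Defensive.
Import Order.TTheory GRing.Theory Num.Theory.
Local Open Scope ring_scope.

Fixpoint cheb (n : nat) : {poly int} :=
  match n with
  | 0%N => 2%:P
  | 1%N => 'X
  | (m.+1 as p).+1 => 'X * cheb p - cheb m
  end.

(* nu s k = coefficient of z^k in the Laurent polynomial (z + z^{-1})^s.
   Since z^s (z + z^{-1})^s = (z^2 + 1)^s, this is the coefficient of
   z^(s+k) in the ordinary polynomial (z^2+1)^s. *)
Definition nu (s k : nat) : int := ((('X ^+ 2 + 1) ^+ s : {poly int})`_(s + k)%N).

Definition evalZ (R : nzRingType) (p : {poly int}) (x : R) : R :=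
  (map_poly (fun c : int => c%:~R) p).[x].

(* Main.v *)
Require Import Defs.
From HB Require Import structures.
From mathcomp Require Import all_boot all_order all_algebra.
From mathcomp Require Import zify.
Import GRing.Theory.
Local Open Scope ring_scope.

Definition aa (s i : nat) : int := ((('X ^+ 2 + 1) ^+ s : {poly int})`_i).

Lemma aa0 i : aa 0 i = (i == 0%N)%:R.
Proof. by rewrite /aa expr0 coef1. Qed.

Lemma aaS s i : aa s.+1 i = (if (i < 2)%N then 0 else aa s (i - 2)) + aa s i.
Proof. by rewrite /aa exprSr mulrDr mulr1 coefD coefMXn. Qed.

Lemma aa_high s i : (2 * s < i)%N -> aa s i = 0.
Proof.
elim: s i => [|s IH] i hi; first by rewrite aa0; case: i hi.
rewrite aaS IH; last lia.
case: ifP => // _; rewrite IH ?addr0 //; lia.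
Qed.

Lemma aa_sym s i : (i <= 2 * s)%N -> aa s i = aa s (2 * s - i).
Proof.
elim: s i => [|s IH] i hi; first by have -> : i = 0%N by lia.
rewrite !aaS.
case: (ltnP i 2) => hi2; case: (ltnP (2 * s.+1 - i) 2) => hj2.
- rewrite !add0r !aa_high //; lia.
- rewrite add0r (@aa_high s (2 * s.+1 - i)%N); last lia.
  rewrite addr0 IH; last lia. congr (aa _ _); lia.
- rewrite add0r (@aa_high s i); last lia.
  rewrite addr0 IH; last lia. congr (aa _ _); lia.
- rewrite IH; last lia. rewrite (IH i); last lia.
  rewrite addrC; congr (aa _ _ + aa _ _); lia.
Qed.

Lemma nu_high s k : (s < k)%N -> nu s k = 0.
Proof. move=> h; rewrite /nu -/(aa s _) aa_high //; lia. Qed.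

Lemma nu_diag s : nu s s = 1.
Proof.
rewrite /nu -/(aa s _).
elim: s => [|s IH]; first by rewrite aa0.
rewrite aaS ifF; last lia.
rewrite (@aa_high s (s.+1 + s.+1)) ?addr0; last lia.
rewrite -IH; congr (aa _ _); lia.
Qed.

Lemma nu_rec s k : nu s.+1 k.+1 = nu s k + nu s k.+2.
Proof.
rewrite /nu -!/(aa _ _) aaS ifF; last lia.
congr (aa _ _ + aa _ _); lia.
Qed.

Lemma nu_rec0 s : nu s.+1 0 = nu s 1 + nu s 1.
Proof.
rewrite /nu -!/(aa _ _) aaS.
case: s => [|s]; first by rewrite /= !aa0.
rewrite aa_sym; last lia.
congr (aa _ _ + aa _ _); lia.
Qed.

Lemma sum_ext0 (R : nzRingType) (F : nat -> R) n m :
  (forall k, (n <= k)%N -> F k = 0) -> (n <= m)%N ->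
  \sum_(0 <= k < m) F k = \sum_(0 <= k < n) F k.
Proof.
move=> hF; elim: m => [|m IH] hm.
  by have -> : n = 0%N by lia.
case: (ltnP n m.+1) => h.
  by rewrite big_nat_recr //= hF ?addr0 ?IH //; lia.
by have -> : n = m.+1 by lia.
Qed.

Section Main.
Variables (R : nzRingType) (x : R).

Definition GG k := evalZ (cheb k) x.
Definition gg k := if k is 0%N then 1 else GG k.
Arguments gg : simpl never.
Definition ee k := match k with 0%N => 0 | 1%N => GG 0 | k'.+2 => gg k'.+1 end.

Lemma GG0 : GG 0 = (2%:Z)%:~R.
Proof. by rewrite /GG /evalZ /= map_polyC hornerC. Qed.

Lemma GG1 : GG 1 = x.
Proof. by rewrite /GG /evalZ /= map_polyX hornerX. Qed.

Lemma GGS k : GG k.+2 = GG k.+1 * x - GG k.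
Proof.
rewrite /GG /evalZ.
have -> : cheb k.+2 = 'X * cheb k.+1 - cheb k by [].
move: (cheb k.+1) (cheb k) => p0 q0.
rewrite rmorphB rmorphM /= map_polyX.
set p := map_poly _ p0.
by rewrite hornerD hornerN -(commr_polyX p) hornerMX.
Qed.

Lemma ggx k : gg k * x = gg k.+1 + ee k.
Proof.
case: k => [|[|k]]; rewrite /gg /ee.
- by rewrite mul1r GG1 addr0.
- by rewrite GGS subrK.
- by rewrite (GGS k.+1) subrK.
Qed.

Lemma ident s : x ^+ s = \sum_(0 <= k < s.+1) (nu s k)%:~R * gg k.
Proof.
elim: s => [|s IH].
  by rewrite big_nat1 /nu expr0 coef1 /= mulr1.
rewrite exprSr IH mulr_suml.
under eq_bigr do rewrite -mulrA ggx mulrDr.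
rewrite big_split /=.
have z0 : forall (F : nat -> R) k, (s.+1 <= k)%N -> (nu s k)%:~R * F k = 0.
  by move=> F k hk; rewrite nu_high ?mul0r.
have E1 : \sum_(0 <= k < s.+1) (nu s k)%:~R * ee k =
    (nu s 1)%:~R * GG 0 + \sum_(0 <= k < s.+1) (nu s k.+2)%:~R * gg k.+1.
  rewrite -(@sum_ext0 _ (fun k => (nu s k)%:~R * ee k) s.+1 s.+3);
    try (by move=> k hk; apply: z0); try lia.
  by rewrite big_nat_recl // big_nat_recl // [ee 0]/= mulr0 add0r.
have E2 : \sum_(0 <= k < s.+2) (nu s.+1 k)%:~R * gg k =
    (nu s.+1 0)%:~R * 1 + \sum_(0 <= k < s.+1) (nu s k)%:~R * gg k.+1
    + \sum_(0 <= k < s.+1) (nu s k.+2)%:~R * gg k.+1.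
  rewrite big_nat_recl //.
  under eq_bigr do rewrite nu_rec intrD mulrDl.
  by rewrite big_split addrA.
rewrite E1 E2 addrCA addrA; congr (_ + _ + _).
rewrite nu_rec0 GG0 mulr1 -intrM intrD.
by rewrite -intrD; congr (_%:~R); rewrite mulrC (_ : 2%Z = 1 + 1) // mulrDl mul1r.
Qed.
End Main.

Theorem lemma4p5 (R : nzRingType) (f : nat -> R) (hf0 : f 0%N = 1)
  (hpow : forall s : nat,
      f 1%N ^+ s = \sum_(k < s.+1) (nu s k)%:~R * f k) :
  forall s : nat, (1 <= s)%N -> f s = evalZ (cheb s) (f 1%N).
Proof.
have H : forall n, f n = gg _ (f 1%N) n.
  elim/ltn_ind => n IHn.
  case: n IHn => [|n] IHn; first by rewrite hf0.
  have h1 := hpow n.+1.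
  have Hs : \sum_(i < n.+1) (nu n.+1 i)%:~R * gg _ (f 1%N) i
          = \sum_(i < n.+1) (nu n.+1 i)%:~R * f i.
    by apply: eq_bigr => i _; rewrite (IHn i).

  rewrite (@ident R (f 1%N) n.+1) big_mkord big_ord_recr [X in _ = X]big_ord_recr /= in h1.
  rewrite Hs nu_diag !mulr1z !mul1r in h1.
  by move/addrI: h1.
move=> [|s] // _; rewrite H /gg //.
Qed.
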